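(* Let $(M,a)$ be Kerr–AdS parameters with $(\mathfrak m,\mathfrak a)\in\mathscr P$, and for $\tilde\lambda\in\mathbb R$ define on $x\in[0,1]$ $$W_1(x)=\Xi^2-\Big[\Xi a^2\omega_-^2+2a\omega_-\Xi\frac{a^2}{l^2}\Big]x^2(1-x^2)-\tilde\lambda\,\Delta_x(1-x^2).$$ Then: (1) if $\tilde\lambda<\Xi^2$, then $W_1>0$ on $[0,1]$; (2) if $\tilde\lambda=\Xi^2$, then $W_1>0$ on $(0,1]$ and $W_1(0)=0$; (3) if $\tilde\lambda>\Xi^2$, then $W_1$ has exactly one root $x_0$ in $[0,1]$, this root satisfies $x_0\in(0,1)$, and $\frac{dW_1}{dx}(x)\ge c\,\tilde\lambda x$ for all $x\in[0,1]$, for a constant $c>0$ depending only on the black hole parameters.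
   Context: $l=\sqrt{-3/\Lambda}$ with $\Lambda<0$; $\Delta(r)=(r^2+a^2)(1+r^2/l^2)-2Mr$ with roots $0<r_-<r_+$, $0<a<l$, $r_+^2>al$ (i.e. $(\mathfrak m,\mathfrak a)=(M\sqrt3/l,a\sqrt3/l)$ lies in the subextremal, Hawking–Reall-bound parameter set $\mathscr P$). $\Xi=1-a^2/l^2$, $\Delta_x=1-\frac{a^2}{l^2}x^2$, $\omega_-=\frac{a\Xi}{r_-^2+a^2}$. *)

(* Defs.v *)
From Stdlib Require Import Reals.
From Coquelicot Require Import Coquelicot.
Open Scope R_scope.

Definition ads_l (Lam : R) : R := sqrt (- 3 / Lam).

Definition Delta (M a l r : R) : R :=
  (r ^ 2 + a ^ 2) * (1 + r ^ 2 / l ^ 2) - 2 * M * r.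

Definition Xi (a l : R) : R := 1 - a ^ 2 / l ^ 2.

Definition Delta_x (a l x : R) : R := 1 - a ^ 2 / l ^ 2 * x ^ 2.

Definition omega_minus (a l rm : R) : R := a * Xi a l / (rm ^ 2 + a ^ 2).

(* Kerr-AdS parameters in the subextremal Hawking-Reall parameter set:
   0 < a < l, Delta has roots 0 < r_- < r_+, and r_+^2 > a l. *)
Definition KerrAdS_params (M a l rm rp : R) : Prop :=
  0 < a < l /\ 0 < rm < rp /\ Delta M a l rm = 0 /\ Delta M a l rp = 0 /\
  rp ^ 2 > a * l.

Definition W1 (a l rm lam x : R) : R :=
  let X := Xi a l in
  let w := omega_minus a l rm in
  X ^ 2
  - (X * a ^ 2 * w ^ 2 + 2 * a * w * X * (a ^ 2 / l ^ 2)) * x ^ 2 * (1 - x ^ 2)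
  - lam * Delta_x a l x * (1 - x ^ 2).

(* Main.v *)
Require Import Defs.
From Stdlib Require Import Reals.
From Coquelicot Require Import Coquelicot.
From Stdlib Require Import Lra Psatz.
Open Scope R_scope.

Definition Wp al u lam x := (1-al)^2 - (1-al)*(u^2+2*u*al)*x^2*(1-x^2) - lam*(1-al*x^2)*(1-x^2).

Lemma Wp_id al u lam x : Wp al u lam x =
  ((1-al)^2-lam)*(1-al*x^2)*(1-x^2) + x^2*(1-x^2)*(1-al)*((1-al)*(1+al)-(u^2+2*u*al))
  + (x^2)^2*(1-al)^2.
Proof. unfold Wp; ring. Qed.

Lemma Kpos al u : 0 < al < 1 -> 0 < u < 1 - al -> 0 < (1-al)*(1+al)-(u^2+2*u*al).
Proof. intros. replace ((1-al)*(1+al)-(u^2+2*u*al)) with ((1-al-u)*(1+al+u)) by ring.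
  apply Rmult_lt_0_compat; lra. Qed.

Lemma Wp_deriv al u lam x : is_derive (Wp al u lam) x
  (2*x*((1-x^2)*(lam*(1+al)-(1-al)*(u^2+2*u*al)) + x^2*(lam*(1-al)+(1-al)*(u^2+2*u*al)))).
Proof. unfold Wp. auto_derive. auto. ring. Qed.

Lemma Wp_cont al u lam : continuity (Wp al u lam).
Proof. intros. unfold Wp. reg. Qed.

Lemma case1 al u lam x : 0 < al < 1 -> 0 < u < 1 - al -> lam < (1-al)^2 -> 0 <= x <= 1 ->
  Wp al u lam x > 0.
Proof.
  intros Ha Hu Hl Hx. rewrite Wp_id. pose proof (Kpos _ _ Ha Hu) as HK.
  set (t := x^2). assert (0 <= t <= 1) by (unfold t; split; nra).
  set (K := (1 - al) * (1 + al) - (u ^ 2 + 2 * u * al)) in *.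
  assert (0 <= t*(1-t)*(1-al)*K).
  { repeat apply Rmult_le_pos; lra. }
  assert (0 <= (t^2)*(1-al)^2) by (apply Rmult_le_pos; nra).
  destruct (Req_dec t 1) as [E|E].
  - rewrite E. nra.
  - assert (0 < ((1-al)^2-lam)*(1-al*t)*(1-t)).
    { repeat apply Rmult_lt_0_compat; nra. }
    lra.
Qed.

Lemma case2 al u x : 0 < al < 1 -> 0 < u < 1 - al -> 0 < x <= 1 ->
  Wp al u ((1-al)^2) x > 0.
Proof.
  intros Ha Hu Hx. rewrite Wp_id. pose proof (Kpos _ _ Ha Hu) as HK.
  set (t := x^2). assert (0 < t <= 1) by (unfold t; split; nra).
  set (K := (1 - al) * (1 + al) - (u ^ 2 + 2 * u * al)) in *.
  assert (0 <= t*(1-t)*(1-al)*K).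
  { repeat apply Rmult_le_pos; lra. }
  assert (0 < (t^2)*(1-al)^2) by (apply Rmult_lt_0_compat; nra).
  replace ((1-al)^2-(1-al)^2) with 0 by ring. lra.
Qed.

Lemma bracket_lb al u lam t : 0 < al < 1 -> 0 < u < 1 - al -> lam > (1-al)^2 -> 0 <= t <= 1 ->
  (1-t)*(lam*(1+al)-(1-al)*(u^2+2*u*al)) + t*(lam*(1-al)+(1-al)*(u^2+2*u*al))
  >= lam * Rmin (((1-al)*(1+al)-(u^2+2*u*al))/(1-al)) (1-al).
Proof.
  intros Ha Hu Hl Ht. pose proof (Kpos _ _ Ha Hu) as HK.
  set (K := (1 - al) * (1 + al) - (u ^ 2 + 2 * u * al)) in *.
  set (m := Rmin (K/(1-al)) (1-al)).
  assert (m <= K/(1-al)) by apply Rmin_l.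
  assert (m <= 1-al) by apply Rmin_r.
  assert (HB : 0 < (1-al)*(u^2+2*u*al)) by (apply Rmult_lt_0_compat; nra).
  assert (HX : 0 < (1-al)^2) by nra.
  assert (H1 : lam*(1+al)-(1-al)*(u^2+2*u*al) >= lam * (K/(1-al))).
  { assert (E : lam*(1+al)-(1-al)*(u^2+2*u*al) - lam*(K/(1-al))
        = (1-al)*(u^2+2*u*al) * (lam - (1-al)^2)/(1-al)^2).
    { unfold K. field. lra. }
    assert (0 <= (1-al)*(u^2+2*u*al) * (lam - (1-al)^2)/(1-al)^2).
    { apply Rmult_le_pos. nra. left; apply Rinv_0_lt_compat; lra. }
    lra. }
  assert (lam > 0) by lra.
  assert (lam * m <= lam*(K/(1-al))) by nra.
  assert (lam * m <= lam*(1-al)) by nra.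
  nra.
Qed.

Lemma mono al u lam t1 t2 : 0 < al < 1 -> 0 < u < 1 - al -> lam > (1-al)^2 ->
  0 <= t1 <= 1 -> 0 <= t2 <= 1 ->
  Wp al u lam (sqrt t1) = Wp al u lam (sqrt t2) -> t1 = t2.
Proof.
  intros Ha Hu Hl H1 H2 E. unfold Wp in E.
  rewrite !pow2_sqrt in E by lra.
  set (P := lam*(1+al)-(1-al)*(u^2+2*u*al)) in *.
  set (Q := (1-al)*(u^2+2*u*al) - lam*al) in *.
  assert (E2 : (t1 - t2) * (P + Q*(t1+t2)) = 0).
  { unfold P, Q. nra. }
  assert (HB : 0 < (1-al)*(u^2+2*u*al)) by (apply Rmult_lt_0_compat; nra).
  pose proof (Kpos _ _ Ha Hu) as HK.
  assert (Hlam0 : lam > 0) by nra.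
  assert (Hb2 : (1-al)*(u^2+2*u*al) < (1-al)^2*(1+al)).
  { replace ((1-al)*(u^2+2*u*al)) with ((1-al)*((1-al)*(1+al)) - (1-al)*((1-al)*(1+al)-(u^2+2*u*al))) by ring.
    assert (0 < (1-al)*((1-al)*(1+al)-(u^2+2*u*al))) by (apply Rmult_lt_0_compat; lra). nra. }
  assert (Hp0 : P > 0).
  { unfold P. assert ((1-al)^2*(1+al) < lam*(1+al)) by (apply Rmult_lt_compat_r; lra). lra. }
  assert (Hpq : P + 2*Q > 0).
  { unfold P, Q. assert (0 < lam*(1-al)) by (apply Rmult_lt_0_compat; lra). lra. }
  assert (P + Q*(t1+t2) > 0).
  { replace (P + Q*(t1+t2)) with ((1-(t1+t2)/2)*P + ((t1+t2)/2)*(P+2*Q)) by field.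
    assert (0 <= (1-(t1+t2)/2)*P) by (apply Rmult_le_pos; lra).
    destruct (Req_dec (t1+t2) 0).
    - rewrite H0. replace ((1 - 0 / 2) * P + 0 / 2 * (P + 2 * Q)) with P by field. lra.
    - assert (0 < ((t1+t2)/2)*(P+2*Q)) by (apply Rmult_lt_0_compat; lra). lra. }
  apply Rmult_integral in E2. destruct E2; lra.
Qed.

Theorem lemma3p1 (Lam M a rm rp : R) :
  Lam < 0 ->
  KerrAdS_params M a (ads_l Lam) rm rp ->
  let l := ads_l Lam in
  let X := Xi a l in
  (forall lam : R, lam < X ^ 2 ->
     forall x : R, 0 <= x <= 1 -> W1 a l rm lam x > 0) /\
  (forall lam : R, lam = X ^ 2 ->
     (forall x : R, 0 < x <= 1 -> W1 a l rm lam x > 0) /\ W1 a l rm lam 0 = 0) /\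
  (exists c : R, c > 0 /\
     forall lam : R, lam > X ^ 2 ->
       (exists x0 : R, 0 < x0 < 1 /\ W1 a l rm lam x0 = 0 /\
          (forall y : R, 0 <= y <= 1 -> W1 a l rm lam y = 0 -> y = x0)) /\
       (forall x : R, 0 <= x <= 1 ->
          Derive (W1 a l rm lam) x >= c * lam * x)).
Proof.
  intros HL [Ha [Hr _]] l X.
  fold l in Ha.
  set (al := a^2/l^2).
  set (u := a * omega_minus a l rm).
  assert (Hl0 : 0 < l) by lra.
  assert (Hal : 0 < al < 1).
  { unfold al. split. apply Rdiv_lt_0_compat; nra.
    apply (Rmult_lt_reg_r (l^2)). nra. field_simplify; nra. }
  assert (HXe : X = 1 - al) by reflexivity.
  assert (Hu : 0 < u < 1 - al).
  { unfold u, omega_minus. fold X. rewrite HXe.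
    replace (a * (a * (1 - al) / (rm ^ 2 + a ^ 2))) with ((1-al) * (a^2/(rm^2+a^2))) by (field; nra).
    assert (0 < a^2/(rm^2+a^2) < 1).
    { split. apply Rdiv_lt_0_compat; nra.
      apply (Rmult_lt_reg_r (rm^2+a^2)). nra. field_simplify; nra. }
    split; nra. }
  assert (HW : forall lam x, W1 a l rm lam x = Wp al u lam x).
  { intros. unfold W1, Wp, Delta_x. fold X. rewrite HXe. unfold u. fold al. ring. }
  rewrite HXe.
  split; [|split].
  - intros lam Hlam x Hx. rewrite HW. apply case1; auto.
  - intros lam Hlam. subst lam. split.
    + intros x Hx. rewrite HW. apply case2; auto.
    + rewrite HW. unfold Wp. ring.
  - pose proof (Kpos _ _ Hal Hu) as HK.
    exists (2 * Rmin (((1-al)*(1+al)-(u^2+2*u*al))/(1-al)) (1-al)).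
    split.
    { assert (0 < Rmin (((1-al)*(1+al)-(u^2+2*u*al))/(1-al)) (1-al)).
      { apply Rmin_glb_lt. apply Rdiv_lt_0_compat; lra. lra. }
      lra. }
    intros lam Hlam. split.
    + assert (Hc : continuity (Wp al u lam)) by apply Wp_cont.
      assert (H0 : Wp al u lam 0 < 0) by (unfold Wp; nra).
      assert (H1 : 0 < Wp al u lam 1) by (unfold Wp; nra).
      destruct (IVT _ 0 1 Hc Rlt_0_1 H0 H1) as [z [Hz Ez]].
      exists z. split; [|split].
      * destruct (Req_dec z 0) as [E|E]; [subst; lra|].
        destruct (Req_dec z 1) as [E'|E']; [subst; lra|]. lra.
      * rewrite HW; exact Ez.
      * intros y Hy Ey. rewrite HW in Ey.
        assert (y^2 = z^2).
        { apply (mono al u lam); try split; try nra.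
          rewrite !sqrt_pow2 by lra. lra. }
        nra.
    + intros x Hx.
      rewrite (Derive_ext _ (Wp al u lam)) by (intros; apply HW).
      rewrite (is_derive_unique _ _ _ (Wp_deriv al u lam x)).
      pose proof (bracket_lb al u lam (x^2) Hal Hu Hlam ltac:(split; nra)) as B.
      set (m := Rmin (((1-al)*(1+al)-(u^2+2*u*al))/(1-al)) (1-al)) in *.
      set (br := (1 - x ^ 2) * (lam * (1 + al) - (1 - al) * (u ^ 2 + 2 * u * al)) +
         x ^ 2 * (lam * (1 - al) + (1 - al) * (u ^ 2 + 2 * u * al))) in *.
      nra.
Qed.
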